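(* Let $S$ be a finite set and let $\{A_1,\dots,A_k\}\subseteq M_S([0,\infty))$ be an irreducible family of nonzero pairwise commuting matrices. Let $F\subseteq\mathbb{N}^k$ be a finite set with $A_F(s,t)>0$ for all $s,t\in S$, and let $x$ be the unimodular Perron-Frobenius eigenvector of $A_F$. Then: (1)(a) $x$ is the unique non-negative vector of unit $1$-norm that is a common eigenvector of all the $A_i$; (b) $A_ix=\rho(A_i)x$ for each $i$, and each $\rho(A_i)>0$; (c) if $z\in\mathbb{C}^S$ and $A_iz=\rho(A_i)z$ for all $i$, then $z\in\mathbb{C}x$. (2) Suppose $y\in[0,\infty)^S$ is nonzero and $\lambda\in[0,\infty)^k$ satisfies $A_iy\le\lambda_iy$ (entrywise) for all $i$. (a) Then $y_s>0$ for every $s\in S$, and $\lambda_i\ge\rho(A_i)$ for all $i$. (b) If moreover $\lambda_i=\rho(A_i)$ for all $i$ and $y$ has unit $1$-norm, then $y=x$. (3) For $n\in\mathbb{N}^k$, $\rho(A^n)=\prod_{i=1}^k\rho(A_i)^{n_i}>0$.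
   Context: For $n\in\mathbb{N}^k$, $A^n=\prod_iA_i^{n_i}$, and for finite $F\subseteq\mathbb{N}^k$, $A_F=\sum_{n\in F}A^n$. The family $\{A_1,\dots,A_k\}$ is irreducible if each $A_i\neq0$ and there is a finite $F\subseteq\mathbb{N}^k$ with $A_F(s,t)>0$ for all $s,t\in S$. $\rho$ denotes spectral radius. For an irreducible non-negative matrix $B$, its unimodular Perron-Frobenius eigenvector is the unique positive eigenvector with eigenvalue $\rho(B)$ and $1$-norm $1$. *)

(* Defs.v *)
From HB Require Import structures.
From mathcomp Require Import all_boot all_order all_algebra.
From mathcomp Require Import complex.
From mathcomp Require Import classical_sets reals.
Set Implicit Arguments. Unset Strict Implicit. Unset Printing Implicit Defensive.
Import Order.TTheory GRing.Theory Num.Theory.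
Local Open Scope ring_scope.
Local Open Scope classical_set_scope.

Section Defs.
Variables (R : realType) (n k : nat).

Definition cmx (p q : nat) (M : 'M[R]_(p, q)) : 'M[R[i]]_(p, q) :=
  map_mx (real_complex R) M.

Definition spectral_radius (B : 'M[R]_n) : R :=
  sup [set Normc.normc z | z in [set z : R[i] | eigenvalue (cmx B) z]].

Definition nonneg_mx p q (M : 'M[R]_(p, q)) : Prop := forall s t, 0 <= M s t.

Definition norm1 (x : 'cV[R]_n) : R := \sum_(s < n) `|x s 0|.

Definition mxpowk (A : 'I_k -> 'M[R]_n) (m : {ffun 'I_k -> nat}) : 'M[R]_n :=
  \prod_(i < k) (A i) ^+ (m i).

(* A_F = sum_{m in F} A^m, F a finite subset of N^k given as a duplicate-free list *)
Definition mxsumF (A : 'I_k -> 'M[R]_n) (F : seq {ffun 'I_k -> nat}) : 'M[R]_n :=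
  \sum_(m <- F) mxpowk A m.

Definition irreducible_family (A : 'I_k -> 'M[R]_n) : Prop :=
  (forall i, A i != 0) /\
  exists F : seq {ffun 'I_k -> nat}, uniq F /\ forall s t, 0 < mxsumF A F s t.

Definition unimodular_PF_vector (B : 'M[R]_n) (x : 'cV[R]_n) : Prop :=
  (forall s, 0 < x s 0) /\ B *m x = spectral_radius B *: x /\ norm1 x = 1.

End Defs.

(* Main.v *)
Require Import Defs.
From HB Require Import structures.
From mathcomp Require Import all_boot all_order all_algebra.
From mathcomp Require Import complex.
From mathcomp Require Import boolp classical_sets reals.
Import Order.TTheory GRing.Theory Num.Theory.
Local Open Scope ring_scope.

Lemma exists_max (R : realType) n (f : 'I_n -> R) : (0 < n)%N -> exists s0, forall t, f t <= f s0.
Proof.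
move=> n0; pose i0 := Ordinal n0.
have [s0 _ H] := @arg_maxP _ R 'I_n i0 xpredT f erefl.
by exists s0 => t; apply: H.
Qed.

Lemma exists_min (R : realType) n (f : 'I_n -> R) : (0 < n)%N -> exists s0, forall t, f s0 <= f t.
Proof.
move=> n0; pose i0 := Ordinal n0.
have [s0 _ H] := @arg_minP _ R 'I_n i0 xpredT f erefl.
by exists s0 => t; apply: H.
Qed.

Lemma normc_real (R : realType) (r : R) : Normc.normc (real_complex R r) = `|r|.
Proof. by rewrite /Normc.normc /= expr0n /= addr0 sqrtr_sqr. Qed.

Lemma normc_ge0 (R : realType) (z : R[i]) : 0 <= Normc.normc z.
Proof. by case: z => a b; rewrite /Normc.normc sqrtr_ge0. Qed.

Lemma normc_sum (R : realType) I (r : seq I) (P : pred I) (G : I -> R[i]) :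
  Normc.normc (\sum_(i <- r | P i) G i) <= \sum_(i <- r | P i) Normc.normc (G i).
Proof.
elim/big_rec2: _ => [|i y1 y2 _ h]; first by rewrite Normc.normc0.
apply: le_trans (le_normcD _ _) _; by rewrite lerD2l.
Qed.

Lemma eigenvalue_det (F : fieldType) n (A : 'M[F]_n) a :
  eigenvalue A a = (\det (a%:M - A) == 0).
Proof.
apply/eigenvalueP/det0P=> [[v Av_av v_nz] | [v v_nz Av_av]]; exists v => //.
  by rewrite mulmxBr Av_av mul_mx_scalar subrr.
by apply/eqP; rewrite -mul_mx_scalar eq_sym -subr_eq0 -mulmxBr Av_av.
Qed.

Lemma eigenvalue_tr (F : fieldType) n (A : 'M[F]_n) a :
  eigenvalue A^T a = eigenvalue A a.
Proof. by rewrite !eigenvalue_det -det_tr linearB /= tr_scalar_mx trmxK. Qed.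

Lemma eigen_col (F : fieldType) n (M : 'M[F]_n) z :
  eigenvalue M z <-> exists2 w : 'cV_n, M *m w = z *: w & w != 0.
Proof.
rewrite -eigenvalue_tr; split.
  move=> /eigenvalueP [v hv v0]; exists v^T; last by rewrite trmx_eq0.
  by rewrite -[M]trmxK -trmx_mul hv linearZ.
move=> [w hw w0]; apply/eigenvalueP; exists w^T; last by rewrite trmx_eq0.
by rewrite -trmx_mul hw linearZ.
Qed.

Lemma eig_bound (R : realType) n (M : 'M[R]_n) (v : 'cV[R]_n) mu z :
  nonneg_mx M -> (forall s, 0 < v s 0) -> (forall s, (M *m v) s 0 <= mu * v s 0) ->
  eigenvalue (cmx M) z -> Normc.normc z <= mu.
Proof.
move=> hM hv hMv /eigen_col [w hw w0].
have : [exists t, w t 0 != 0].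
  apply: contraNT w0 => /existsPn h; apply/eqP/matrixP => i j.
  by rewrite ord1 mxE; exact/eqP/negbNE/h.
case/existsP => t wt.
have n0 : (0 < n)%N := leq_ltn_trans (leq0n t) (ltn_ord t).
pose f s := Normc.normc (w s 0) / v s 0.
have [s0 hs0] := @exists_max R n f n0.
set c := f s0.
have hc : forall u, Normc.normc (w u 0) <= c * v u 0.
  by move=> u; rewrite -ler_pdivrMr //; exact: hs0.
have wt0 : 0 < Normc.normc (w t 0).
  rewrite lt_def normc_ge0 andbT; apply: contra wt => /eqP /Normc.eq0_normc ->.
  by [].
have cpos : 0 < c by apply: lt_le_trans (hs0 t); rewrite /f divr_gt0.
have e : c * v s0 0 = Normc.normc (w s0 0) by rewrite /c /f divfK // gt_eqF.
have ws0 : 0 < Normc.normc (w s0 0) by rewrite -e mulr_gt0.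
have key : Normc.normc z * Normc.normc (w s0 0) <= mu * Normc.normc (w s0 0).
  rewrite -Normc.normcM.
  have -> : z * w s0 0 = (cmx M *m w) s0 0 by rewrite hw mxE.
  rewrite mxE; apply: le_trans (normc_sum _ _ _ _ _) _.
  apply: (@le_trans _ _ (\sum_j M s0 j * (c * v j 0))).
    apply: ler_sum => j _; rewrite Normc.normcM /cmx mxE normc_real ger0_norm //.
    exact: ler_wpM2l.
  rewrite (_ : \sum_j _ = c * (M *m v) s0 0); last first.
    by rewrite mxE mulr_sumr; apply: eq_bigr => j _; rewrite mulrCA.
  apply: le_trans (ler_wpM2l (ltW cpos) (hMv s0)) _.
  by rewrite mulrCA e.
by rewrite -(ler_pM2r ws0).
Qed.

Lemma sr_le (R : realType) n (M : 'M[R]_n) (v : 'cV[R]_n) mu :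
  nonneg_mx M -> (forall s, 0 < v s 0) -> 0 <= mu ->
  (forall s, (M *m v) s 0 <= mu * v s 0) -> spectral_radius M <= mu.
Proof.
move=> hM hv mu0 hMv; rewrite /spectral_radius; set S := (X in sup X).
have ub : ubound S mu by move=> y [z hz <-]; exact: eig_bound hz.
have [hS|hS] := pselect (has_sup S); first exact: ge_sup (hS.1) ub.
by rewrite sup_out.
Qed.

Lemma sr_eq (R : realType) n (M : 'M[R]_n) (v : 'cV[R]_n) mu : (0 < n)%N ->
  nonneg_mx M -> (forall s, 0 < v s 0) -> M *m v = mu *: v -> spectral_radius M = mu.
Proof.
move=> n0 hM hv hMv.
have mu0 : 0 <= mu.
  have : 0 <= (M *m v) (Ordinal n0) 0 by rewrite mxE sumr_ge0 // => j _; rewrite mulr_ge0 // ltW.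
  by rewrite hMv mxE pmulr_lge0.
have hle : forall s, (M *m v) s 0 <= mu * v s 0 by move=> s; rewrite hMv mxE.
rewrite /spectral_radius; set S := (X in sup X).
have ub : ubound S mu by move=> y [z hz <-]; exact: eig_bound hz.
have inS : S mu.
  exists (real_complex R mu); last by rewrite normc_real ger0_norm.
  apply/eigen_col; exists (cmx v).
    rewrite /cmx -map_mxM hMv; apply/matrixP => i j; rewrite !mxE.
    by rewrite rmorphM.
  apply/eqP => /matrixP /(_ (Ordinal n0) 0); rewrite !mxE => /eqP.
  by rewrite fmorph_eq0 (gt_eqF (hv _)).
have hs : has_sup S by split; [exists mu | exists mu].
apply/le_anti; rewrite ge_sup //=; last by exists mu.
exact: sup_upper_bound hs _ inS.
Qed.

Lemma rank1 (R : realType) n (B : 'M[R]_n) (x u : 'cV[R]_n) r : (0 < n)%N ->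
  (forall s t, 0 < B s t) -> (forall s, 0 < x s 0) -> B *m x = r *: x ->
  (forall s, (B *m u) s 0 <= r * u s 0) -> exists c, u = c *: x.
Proof.
move=> n0 hB hx hBx hBu.
have [s0 hs0] := @exists_min R n (fun s => u s 0 / x s 0) n0.
set c := u s0 0 / x s0 0.
pose d := u - c *: x.
have dge : forall t, 0 <= d t 0.
  by move=> t; rewrite !mxE subr_ge0 -ler_pdivlMr //; exact: hs0.
have us0 : u s0 0 = c * x s0 0 by rewrite /c divfK // gt_eqF.
have Bd : (B *m d) s0 0 <= 0.
  have -> : (B *m d) s0 0 = (B *m u) s0 0 - c * (r * x s0 0).
    by rewrite mulmxBr -scalemxAr hBx !mxE.
  by rewrite subr_le0; apply: le_trans (hBu s0) _; rewrite us0 mulrCA.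
have Bd0 : 0 <= (B *m d) s0 0.
  by rewrite mxE sumr_ge0 // => t _; rewrite mulr_ge0 // ltW.
have : (B *m d) s0 0 = 0 by apply/le_anti; rewrite Bd Bd0.
rewrite mxE => /psumr_eq0P h.
exists c; apply/matrixP => t j; rewrite ord1.
have /eqP : B s0 t * d t 0 = 0 by apply: h => // i _; rewrite mulr_ge0 // ltW.
rewrite mulf_eq0 gt_eqF //= => /eqP.
by rewrite !mxE => /eqP; rewrite subr_eq0 => /eqP.
Qed.

Section Prod.
Variables (R : realType) (n k : nat) (A : 'I_k -> 'M[R]_n).

Definition EQ (v : 'cV[R]_n) (M : 'M[R]_n) (c : R) := M *m v = c *: v.

Lemma EQ1 v : EQ v 1 1. Proof. by rewrite /EQ mul1mx scale1r. Qed.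
Lemma EQM v M N a b : EQ v M a -> EQ v N b -> EQ v (M * N) (a * b).
Proof.
rewrite /EQ => hM hN; rewrite -mulmxE -mulmxA hN -scalemxAr hM scalerA mulrC //.
Qed.
Lemma EQ0 v : EQ v 0 0. Proof. by rewrite /EQ mul0mx scale0r. Qed.
Lemma EQD v M N a b : EQ v M a -> EQ v N b -> EQ v (M + N) (a + b).
Proof. by rewrite /EQ => hM hN; rewrite mulmxDl hM hN scalerDl. Qed.
Lemma EQX v M a m : EQ v M a -> EQ v (M ^+ m) (a ^+ m).
Proof. move=> h; elim: m => [|m ih]; first by rewrite !expr0; apply: EQ1.
by rewrite !exprS; apply: EQM. Qed.

Lemma mxpowk_eig (v : 'cV[R]_n) (mu : 'I_k -> R) (m : {ffun 'I_k -> nat}) :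
  (forall i, A i *m v = mu i *: v) ->
  mxpowk A m *m v = (\prod_(i < k) mu i ^+ m i) *: v.
Proof.
move=> h; rewrite /mxpowk.
apply: (@big_ind2 _ _ (EQ v)); [exact: EQ1 | move=> *; exact: EQM | ].
by move=> i _; apply: EQX; exact: h.
Qed.

Lemma mxsumF_eig (v : 'cV[R]_n) (mu : 'I_k -> R) F :
  (forall i, A i *m v = mu i *: v) ->
  mxsumF A F *m v = (\sum_(m <- F) \prod_(i < k) mu i ^+ m i) *: v.
Proof.
move=> h; rewrite /mxsumF.
apply: (@big_ind2 _ _ (EQ v)); [exact: EQ0 | move=> *; exact: EQD | ].
by move=> m _; apply: mxpowk_eig.
Qed.

Definition LE (y : 'cV[R]_n) (M : 'M[R]_n) (c : R) :=
  [/\ nonneg_mx M, 0 <= c & forall s, (M *m y) s 0 <= c * y s 0].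

Lemma LE1 y : LE y 1 1.
Proof.
split => //; last by move=> s; rewrite mul1mx mul1r.
by move=> s t; rewrite mxE ler0n.
Qed.
Lemma LEM y M N a b : LE y M a -> LE y N b -> LE y (M * N) (a * b).
Proof.
move=> [hM a0 hMy] [hN b0 hNy]; split.
- move=> s t; rewrite -mulmxE mxE sumr_ge0 // => u _; exact: mulr_ge0.
- exact: mulr_ge0.
move=> s; rewrite -mulmxE -mulmxA.
apply: (@le_trans _ _ (b * (M *m y) s 0)).
  rewrite [X in X <= _]mxE [(M *m y) s 0]mxE mulr_sumr; apply: ler_sum => u _.
  by rewrite mulrCA; apply: ler_wpM2l.
by rewrite [a * b]mulrC -mulrA; apply: ler_wpM2l.
Qed.
Lemma LE0 y : LE y 0 0.
Proof. by split => // [s t|s]; rewrite ?mul0mx !mxE ?mul0r. Qed.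
Lemma LED y M N a b : LE y M a -> LE y N b -> LE y (M + N) (a + b).
Proof.
move=> [hM a0 hMy] [hN b0 hNy]; split.
- by move=> s t; rewrite mxE addr_ge0.
- exact: addr_ge0.
by move=> s; rewrite mulmxDl mxE mulrDl lerD.
Qed.
Lemma LEX y M a m : LE y M a -> LE y (M ^+ m) (a ^+ m).
Proof. move=> h; elim: m => [|m ih]; first by rewrite !expr0; apply: LE1.
by rewrite !exprS; apply: LEM. Qed.

Lemma mxpowk_le (y : 'cV[R]_n) (lam : 'I_k -> R) (m : {ffun 'I_k -> nat}) :
  (forall i, nonneg_mx (A i)) -> (forall i, 0 <= lam i) ->
  (forall i s, (A i *m y) s 0 <= lam i * y s 0) ->
  LE y (mxpowk A m) (\prod_(i < k) lam i ^+ m i).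
Proof.
move=> hA hl h; rewrite /mxpowk.
apply: (@big_ind2 _ _ (LE y)); [exact: LE1 | move=> *; exact: LEM | ].
by move=> i _; apply: LEX; split.
Qed.

Lemma mxsumF_le (y : 'cV[R]_n) (lam : 'I_k -> R) F :
  (forall i, nonneg_mx (A i)) -> (forall i, 0 <= lam i) ->
  (forall i s, (A i *m y) s 0 <= lam i * y s 0) ->
  LE y (mxsumF A F) (\sum_(m <- F) \prod_(i < k) lam i ^+ m i).
Proof.
move=> hA hl h; rewrite /mxsumF.
apply: (@big_ind2 _ _ (LE y)); [exact: LE0 | move=> *; exact: LED | ].
by move=> m _; apply: mxpowk_le.
Qed.

End Prod.

Lemma sum_ge_term (R : realType) (I : finType) (G : I -> R) j :
  (forall i, 0 <= G i) -> G j <= \sum_i G i.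
Proof. by move=> h; rewrite (bigD1 j) //= lerDl sumr_ge0. Qed.

Lemma pos_mul (R : realType) n (B : 'M[R]_n) (y : 'cV[R]_n) :
  (forall s t, 0 < B s t) -> (forall s, 0 <= y s 0) -> y != 0 ->
  forall s, 0 < (B *m y) s 0.
Proof.
move=> hB hy y0 s.
have : [exists t, y t 0 != 0].
  apply: contraNT y0 => /existsPn h; apply/eqP/matrixP => i j.
  by rewrite ord1 mxE; exact/eqP/negbNE/h.
case/existsP => t yt.
have yt0 : 0 < y t 0 by rewrite lt_def yt hy.
apply: lt_le_trans (mulr_gt0 (hB s t) yt0) _; rewrite mxE.
by apply: (@sum_ge_term R _ (fun u => B s u * y u 0) t) => u; rewrite mulr_ge0 // ltW.
Qed.

Lemma norm1Z (R : realType) n (x : 'cV[R]_n) c : norm1 (c *: x) = `|c| * norm1 x.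
Proof. by rewrite /norm1 mulr_sumr; apply: eq_bigr => s _; rewrite mxE normrM. Qed.

Lemma norm1_eq (R : realType) n (x y : 'cV[R]_n) c : (0 < n)%N ->
  y = c *: x -> norm1 y = 1 -> norm1 x = 1 -> (forall s, 0 < x s 0) ->
  (forall s, 0 <= y s 0) -> y = x.
Proof.
move=> n0 -> ny nx hx hy.
have c0 : 0 <= c.
  by have := hy (Ordinal n0); rewrite mxE pmulr_lge0.
move: ny; rewrite norm1Z nx mulr1 ger0_norm // => c1.
by rewrite c1 scale1r.
Qed.

Notation cRe := (@complex.Re _).
Notation cIm := (@complex.Im _).

Lemma Re_sum (R : realType) I (r : seq I) (P : pred I) (G : I -> R[i]) :
  cRe (\sum_(i <- r | P i) G i) = \sum_(i <- r | P i) cRe (G i).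
Proof. by elim/big_rec2: _ => [|j y1 y2 _ <-]; [reflexivity| case: (G j); case: y2]. Qed.

Lemma Im_sum (R : realType) I (r : seq I) (P : pred I) (G : I -> R[i]) :
  cIm (\sum_(i <- r | P i) G i) = \sum_(i <- r | P i) cIm (G i).
Proof. by elim/big_rec2: _ => [|j y1 y2 _ <-]; [reflexivity| case: (G j); case: y2]. Qed.

Lemma Re_rmul (R : realType) (r : R) w : cRe (real_complex R r * w) = r * cRe w.
Proof. by case: w => a b /=; rewrite !mul0r subr0. Qed.

Lemma Im_rmul (R : realType) (r : R) w : cIm (real_complex R r * w) = r * cIm w.
Proof. by case: w => a b /=; rewrite !mul0r addr0. Qed.

Lemma cplx_eq (R : realType) (p q c1 c2 xs : R) :
  p = c1 * xs -> q = c2 * xs -> Complex p q = Complex c1 c2 * real_complex R xs.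
Proof. by move=> -> ->; rewrite (complexE (Complex (c1 * xs) (c2 * xs))) (complexE (Complex c1 c2)) /= !rmorphM mulrDl mulrA. Qed.

Theorem proposition3p1 (R : realType) (n k : nat)
  (A : 'I_k -> 'M[R]_n)
  (hnonneg : forall i, nonneg_mx (A i))
  (hirr : irreducible_family A)
  (hcomm : forall i j, A i *m A j = A j *m A i)
  (F : seq {ffun 'I_k -> nat}) (hFu : uniq F)
  (hF : forall s t, 0 < mxsumF A F s t)
  (x : 'cV[R]_n) (hx : unimodular_PF_vector (mxsumF A F) x) :
  (* (1)(a) *)
  ((forall i, exists mu : R, A i *m x = mu *: x) /\
   (forall y : 'cV[R]_n, (forall s, 0 <= y s 0) -> norm1 y = 1 ->
      (forall i, exists mu : R, A i *m y = mu *: y) -> y = x)) /\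
  (* (1)(b) *)
  (forall i, A i *m x = spectral_radius (A i) *: x /\ 0 < spectral_radius (A i)) /\
  (* (1)(c) *)
  (forall z : 'cV[R[i]]_n,
      (forall i, cmx (A i) *m z = real_complex R (spectral_radius (A i)) *: z) ->
      exists c : R[i], z = c *: cmx x) /\
  (* (2) *)
  (forall (y : 'cV[R]_n) (lam : 'I_k -> R),
      (forall s, 0 <= y s 0) -> y != 0 -> (forall i, 0 <= lam i) ->
      (forall i s, (A i *m y) s 0 <= lam i * y s 0) ->
      ((forall s, 0 < y s 0) /\ (forall i, spectral_radius (A i) <= lam i)) /\
      ((forall i, lam i = spectral_radius (A i)) -> norm1 y = 1 -> y = x)) /\
  (* (3) *)
  (forall m : {ffun 'I_k -> nat},
      spectral_radius (mxpowk A m) = \prod_(i < k) spectral_radius (A i) ^+ m i /\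
      0 < spectral_radius (mxpowk A m)).
Proof.
have [xpos [hBx nx1]] := hx.
set r := spectral_radius (mxsumF A F) in hBx.
have n0 : (0 < n)%N.
  rewrite lt0n; apply/eqP => en; move: nx1; clear -en; subst n.
  by rewrite /norm1 big_ord0 => /eqP; rewrite eq_sym oner_eq0.
have commB : forall i, A i *m mxsumF A F = mxsumF A F *m A i.
  move=> i; rewrite !mulmxE; apply: commr_sum => m _; apply: commr_prod => j _.
  by apply: commrX; rewrite /GRing.comm -!mulmxE hcomm.
have nnB : nonneg_mx (mxsumF A F) by move=> s t; exact: ltW (hF s t).
have eig1 : forall i, exists mu, A i *m x = mu *: x.
  move=> i.
  have [c hc] := @rank1 R n _ x (A i *m x) r n0 hF xpos hBx
    ltac:(by move=> s; rewrite mulmxA -commB -mulmxA hBx -scalemxAr !mxE).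
  by exists c.
have [mu hmu] := fin_all_exists eig1.
have hrho : forall i, spectral_radius (A i) = mu i :=
  fun i => @sr_eq R n (A i) x (mu i) n0 (hnonneg i) xpos (hmu i).
have hAx : forall i, A i *m x = spectral_radius (A i) *: x.
  by move=> i; rewrite hrho hmu.
have rpos : forall i, 0 < spectral_radius (A i).
  move=> i; have Ai0 := hirr.1 i.
  have : [exists s, exists t, A i s t != 0].
    apply: contraNT Ai0 => /existsPn h; apply/eqP/matrixP => s t; rewrite mxE.
    by move: (h s) => /existsPn /(_ t) /negbNE /eqP.
  case/existsP => s /existsP [t hst].
  have Ast : 0 < A i s t by rewrite lt_def hst hnonneg.
  have : 0 < (A i *m x) s 0.
    apply: lt_le_trans (mulr_gt0 Ast (xpos t)) _; rewrite mxE.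
    apply: (@sum_ge_term R _ (fun u => A i s u * x u 0) t) => u.
    exact: mulr_ge0 (hnonneg i s u) (ltW (xpos u)).
  by rewrite hAx mxE pmulr_lgt0.
have hAle : forall i s, (A i *m x) s 0 <= spectral_radius (A i) * x s 0.
  by move=> i s; rewrite hAx mxE.
pose L := \sum_(m <- F) \prod_(i < k) spectral_radius (A i) ^+ m i.
have hBL : mxsumF A F *m x = L *: x :=
  @mxsumF_eig R n k A x (fun i => spectral_radius (A i)) F hAx.
have rL : r = L.
  move: hBL; rewrite hBx => /matrixP /(_ (Ordinal n0) 0); rewrite !mxE => e.
  exact: (mulIf (lt0r_neq0 (xpos (Ordinal n0)))) e.
split; first split.
- exact: eig1.
- move=> y hy ny hAy.
  have [nu hnu] := fin_all_exists hAy.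
  have y0 : y != 0.
    apply/eqP => e; have : norm1 y = 0.
      by rewrite e /norm1 big1 // => s _; rewrite mxE normr0.
    by rewrite ny => /eqP; rewrite oner_eq0.
  have hBy := @mxsumF_eig R n k A y nu F hnu.
  set L' := (X in X *: y) in hBy.
  have ypos : forall s, 0 < y s 0.
    move=> s; have := @pos_mul R n _ y hF hy y0 s; rewrite hBy mxE => h.
    rewrite lt_def (hy s) andbT; apply/eqP => e; move: h; by rewrite e mulr0 ltxx.
  have rL' : r = L' := @sr_eq R n _ y L' n0 nnB ypos hBy.
  have [c hc] := @rank1 R n _ x y r n0 hF xpos hBx
    ltac:(by move=> s; rewrite hBy rL' mxE).
  exact: @norm1_eq R n x y c n0 hc ny nx1 xpos hy.
split.
  by move=> i; split; [exact: hAx | exact: rpos].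
split.
  move=> z hz.
  pose a : 'cV[R]_n := map_mx (@complex.Re R) z.
  pose b : 'cV[R]_n := map_mx (@complex.Im R) z.
  have ha : forall i, A i *m a = spectral_radius (A i) *: a.
    move=> i; apply/matrixP => s j; rewrite ord1.
    have e1 : (A i *m a) s 0 = complex.Re ((cmx (A i) *m z) s 0).
      by rewrite !mxE Re_sum; apply: eq_bigr => t _; rewrite !mxE Re_rmul.
    have e2 : (spectral_radius (A i) *: a) s 0 =
        complex.Re ((real_complex R (spectral_radius (A i)) *: z) s 0).
      by rewrite !mxE Re_rmul.
    by rewrite e1 e2 hz.
  have hb : forall i, A i *m b = spectral_radius (A i) *: b.
    move=> i; apply/matrixP => s j; rewrite ord1.
    have e1 : (A i *m b) s 0 = complex.Im ((cmx (A i) *m z) s 0).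
      by rewrite !mxE Im_sum; apply: eq_bigr => t _; rewrite !mxE Im_rmul.
    have e2 : (spectral_radius (A i) *: b) s 0 =
        complex.Im ((real_complex R (spectral_radius (A i)) *: z) s 0).
      by rewrite !mxE Im_rmul.
    by rewrite e1 e2 hz.
  have [c1 hc1] := @rank1 R n _ x a r n0 hF xpos hBx
    ltac:(by move=> s; rewrite (@mxsumF_eig R n k A a _ F ha) rL mxE).
  have [c2 hc2] := @rank1 R n _ x b r n0 hF xpos hBx
    ltac:(by move=> s; rewrite (@mxsumF_eig R n k A b _ F hb) rL mxE).
  exists (Complex c1 c2); apply/matrixP => s j; rewrite ord1 !mxE.
  have h1 : complex.Re (z s 0) = c1 * x s 0.
    by move/matrixP: hc1 => /(_ s 0); rewrite !mxE.
  have h2 : complex.Im (z s 0) = c2 * x s 0.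
    by move/matrixP: hc2 => /(_ s 0); rewrite !mxE.
  move: h1 h2; case: (z s 0) => p q /= h1 h2; exact: cplx_eq h1 h2.
split.
  move=> y lam hy y0 hl hAy.
  have [_ _ hBy] := @mxsumF_le R n k A y lam F hnonneg hl hAy.
  have ypos : forall s, 0 < y s 0.
    move=> s; rewrite lt_def (hy s) andbT; apply/eqP => e.
    by move: (hBy s); rewrite e mulr0 leNgt (@pos_mul R n _ y hF hy y0 s).
  split; first split.
  + exact: ypos.
  + move=> i; exact: @sr_le R n (A i) y (lam i) (hnonneg i) ypos (hl i) (hAy i).
  move=> hlr ny.
  have eL : \sum_(m <- F) \prod_(i < k) lam i ^+ m i = L.
    by apply: eq_bigr => m _; apply: eq_bigr => i _; rewrite hlr.
  have [c hc] := @rank1 R n _ x y r n0 hF xpos hBx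
    ltac:(by move=> s; rewrite rL -eL; exact: hBy s).
  exact: @norm1_eq R n x y c n0 hc ny nx1 xpos hy.
move=> m.
have hm := @mxpowk_eig R n k A x _ m hAx.
have [nnm _ _] := @mxpowk_le R n k A x (fun i => spectral_radius (A i)) m
  hnonneg (fun i => ltW (rpos i)) hAle.
rewrite (@sr_eq R n _ x _ n0 nnm xpos hm).
by split => //; apply: prodr_gt0 => i _; exact: exprn_gt0.
Qed.
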